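(* Let $c=q_1^{a_1}\cdots q_\omega^{a_\omega}$ with $q_1,\dots,q_\omega$ distinct primes and $a_j\ge1$. If $a_i=1$ for some $i$, then $$E_c(q_i)=\frac{\varphi(c)}{q_i-1}-E_{c/q_i}(q_i).$$
   Context: $\varphi$ is Euler's totient function. For a positive integer $n$ with distinct prime factors $p_1,\dots,p_r$ ($r=0$ if $n=1$) and real $x\ne 0$, $$E_n(x)=\sum_{S\subseteq\{1,\dots,r\}}(-1)^{|S|}\left\lfloor \frac{n}{x\prod_{j\in S}p_j}\right\rfloor$$ (so $E_1(x)=\lfloor 1/x\rfloor$). *)

(* Defs.v *)
From HB Require Import structures.
From mathcomp Require Import all_boot all_order all_algebra.
Set Implicit Arguments. Unset Strict Implicit. Unset Printing Implicit Defensive.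
Import Order.TTheory GRing.Theory Num.Theory.
Local Open Scope ring_scope.

Definition E (R : archiRealFieldType) (n : nat) (x : R) : int :=
  \sum_(S : {set 'I_(size (primes n))})
     (-1) ^+ #|S| * Num.floor (n%:R / (x * \prod_(j in S) ((nth 0%N (primes n) j)%:R : R))).

(* Main.v *)
Require Import Defs.
From HB Require Import structures.
From mathcomp Require Import all_boot all_order all_algebra ring zify.
Set Implicit Arguments. Unset Strict Implicit. Unset Printing Implicit Defensive.
Import Order.TTheory GRing.Theory Num.Theory.
Local Open Scope ring_scope.

Definition GenN (R : archiRealFieldType) (k : nat) (f : nat -> nat) (y : R) : int :=
  \sum_(S : {set 'I_k}) (-1) ^+ #|S| * Num.floor (y / \prod_(j in S) ((f j)%:R : R)).

Lemma GenN_ext (R : archiRealFieldType) k f g (y : R) :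
  (forall j, f j = g j) -> GenN k f y = GenN k g y.
Proof.
move=> fg; apply: eq_bigr => S _; congr (_ * Num.floor (_ / _)).
by apply: eq_bigr => j _; rewrite fg.
Qed.

Lemma sum_split_set (V : nmodType) k (i : 'I_k.+1) (F : {set 'I_k.+1} -> V) :
  \sum_(S : {set 'I_k.+1}) F S =
  \sum_(T : {set 'I_k}) F (lift i @: T) + \sum_(T : {set 'I_k}) F (i |: lift i @: T).
Proof.
pose h (p : bool * {set 'I_k}) := if p.1 then i |: lift i @: p.2 else lift i @: p.2.
pose g (S : {set 'I_k.+1}) := (i \in S, lift i @^-1: S).
have nl : forall j, (lift i j == i) = false.
  by move=> j; apply/negbTE; rewrite eq_sym neq_lift.
have nl' : forall T : {set 'I_k}, i \notin lift i @: T.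
  by move=> T; apply/negP => /imsetP [j _ E]; move: (nl j); rewrite -E eqxx.
have hK : cancel h g.
  case=> b T; rewrite /g /h; case: b => /=; congr (_, _).
  - by rewrite setU11.
  - apply/setP=> j; rewrite !inE mem_imset; last exact: lift_inj.
    by rewrite nl.
  - by rewrite (negbTE (nl' _)).
  - apply/setP=> j; rewrite !inE mem_imset //; exact: lift_inj.
have gK : cancel g h.
  move=> S; rewrite /g /h /=; apply/setP => x.
  case: (unliftP i x) => [j ->|->].
    have e: (lift i j \in lift i @: (lift i @^-1: S)) = (lift i j \in S).
      by rewrite mem_imset ?inE //; exact: lift_inj.
    by case: (i \in S); rewrite ?inE ?e // nl.
  case iS: (i \in S); first by rewrite !inE eqxx.
  exact: negbTE (nl' _).
rewrite (reindex h); last by exists g => p _ ; [exact: hK | exact: gK].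
rewrite -(pair_big xpredT xpredT (fun b T => F (h (b, T)))) /=.
by rewrite big_bool /= addrC.
Qed.

Lemma GenN_split (R : archiRealFieldType) k f (y : R) (i : nat) : (i < k.+1)%N ->
  GenN k.+1 f y = GenN k (fun j => f (bump i j)) y
                 - GenN k (fun j => f (bump i j)) (y / (f i)%:R).
Proof.
move=> ik; pose i' := Ordinal ik.
rewrite /GenN (sum_split_set i') -sumrN; congr (_ + _); apply: eq_bigr => T _.
  rewrite card_imset; last exact: lift_inj.
  by rewrite big_imset //; move=> a b _ _; exact: lift_inj.
have niT : i' \notin lift i' @: T.
  apply/negP => /imsetP [j _ E]; move: (neq_lift i' j); by rewrite -E eqxx.
rewrite cardsU1 niT card_imset; last exact: lift_inj.
rewrite big_setU1 //= big_imset /=; last by move=> a b _ _; exact: lift_inj.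
by rewrite exprS invfM mulrA !mulN1r mulNr.
Qed.

Lemma prod_primes_dvd (m : nat) : (0 < m)%N -> (\prod_(p <- primes m) p %| m)%N.
Proof.
move=> m0; rewrite {2}(prod_prime_decomp m0) prime_decompE big_map /=.
rewrite big_seq [X in (_ %| X)%N]big_seq.
apply: (big_ind2 (fun a b => a %| b)%N) => //.
  by move=> *; exact: dvdn_mul.
move=> p; rewrite -logn_gt0 => lp; case: (logn p m) lp => // e _.
by rewrite expnS dvdn_mulr.
Qed.

Lemma totient_sum (R : archiRealFieldType) (m : nat) : (0 < m)%N ->
  \sum_(T : {set 'I_(size (primes m))}) (-1) ^+ #|T| *
     Num.floor ((m%:R : R) / \prod_(j in T) ((nth 0%N (primes m) j)%:R : R))
  = (totient m)%:Z.
Proof.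
move=> m0; set k := size (primes m); set f := nth 0%N (primes m).
have dv : forall T : {set 'I_k}, (\prod_(j in T) f j %| m)%N.
  move=> T; apply: dvdn_trans (prod_primes_dvd m0).
  rewrite (big_nth 0%N) big_mkord [X in (_ %| X)%N](bigID (mem T)) /=; exact: dvdn_mulr.
transitivity (\sum_(T : {set 'I_k}) (-1) ^+ #|T| * ((m %/ \prod_(j in T) f j)%N : int)).
  apply: eq_bigr => T _; congr (_ * _).
  rewrite -natr_prod -natf_div //.
  by rewrite -[X in Num.floor X]/(((m %/ \prod_(j in T) f j)%N%:Z)%:~R) intrKfloor.
apply: (@intr_inj R).
rewrite rmorph_sum /=.
under eq_bigr => T _ do rewrite rmorphM rmorphXn /= rmorphN1 -pmulrn natf_div // natr_prod.
have -> : \sum_(T : {set 'I_k}) (-1) ^+ #|T| * ((m%:R : R) / \prod_(j in T) (f j)%:R)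
    = m%:R * \prod_(j < k) (- ((f j)%:R : R)^-1 + 1).
  rewrite bigA_distr mulr_sumr; apply: eq_bigr => T _.
  by rewrite -big_mkcond /= prodrN prodfV mulrCA.
have -> : \prod_(j < k) (- ((f j)%:R : R)^-1 + 1)
    = \prod_(p <- primes m) (- (p%:R : R)^-1 + 1) by rewrite (big_nth 0%N) big_mkord.
rewrite -pmulrn totientE // natr_prod {1}(prod_prime_decomp m0) prime_decompE big_map natr_prod /=.
rewrite -big_split /= big_seq [RHS]big_seq; apply: eq_bigr => p pm.
have pp : prime p by move: pm; rewrite mem_primes => /andP [].
have := pm; rewrite -logn_gt0; case: (logn p m) => // e _.
case: p pp {pm} => // p' _ /=.
rewrite natrX natrM natrX exprS -addn1 natrD.
by field; rewrite natr1 pnatr_eq0.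
Qed.

Lemma primes_div (c q : nat) : (0 < c)%N -> prime q -> (q %| c)%N -> logn q c = 1%N ->
  primes (c %/ q) = rem q (primes c).
Proof.
move=> c0 pq qc lq.
set m := (c %/ q)%N.
have cm : c = (m * q)%N by rewrite divnK.
have m0 : (0 < m)%N by move: c0; rewrite cm muln_gt0 => /andP [].
have q0 : (0 < q)%N := prime_gt0 pq.
have nqm : ~~ (q %| m)%N.
  apply/negP => qm.
  have : (0 < logn q m)%N by rewrite logn_gt0 mem_primes pq m0 qm.
  move: lq; rewrite cm lognM // (logn_prime q pq) eqxx; lia.
apply: (irr_sorted_eq ltn_trans ltnn (sorted_primes m)).
  exact: (subseq_sorted ltn_trans (rem_subseq q _) (sorted_primes c)).
move=> p; rewrite (mem_rem_uniq _ (primes_uniq c)) !inE !mem_primes c0 m0 /=.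
apply/idP/idP.
  move=> /andP [pp pm].
  have -> : p != q by apply/eqP => E; move: nqm; rewrite -E pm.
  by rewrite pp /= cm dvdn_mulr.
move=> /andP [nq /andP [pp pc]]; rewrite pp /=.
move: pc; rewrite cm Euclid_dvdM // => /orP [] // pq'.
by move: pq'; rewrite dvdn_prime2 // (negbTE nq).
Qed.

Lemma E_GenN (R : archiRealFieldType) (n : nat) (x : R) :
  E n x = GenN (size (primes n)) (nth 0%N (primes n)) (n%:R / x).
Proof.
by apply: eq_bigr => S _; rewrite invfM mulrA.
Qed.

Unset Implicit Arguments.
Theorem lemma4 (R : archiRealFieldType) (c q : nat) :
  (0 < c)%N -> prime q -> (q %| c)%N -> logn q c = 1%N ->
  ((E c (q%:R : R))%:~R : R) =
    (totient c)%:R / (q%:R - 1) - ((E (c %/ q) (q%:R : R))%:~R : R).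
Proof.
move=> c0 pq qc lq.
have pmE := primes_div c0 pq qc lq.
set m := (c %/ q)%N in pmE *.
have cm : c = (m * q)%N by rewrite divnK.
have m0 : (0 < m)%N by move: c0; rewrite cm muln_gt0 => /andP [].
have q1 : (1 < q)%N := prime_gt1 pq.
have nqm : ~~ (q %| m)%N.
  apply/negP => qm.
  have : (0 < logn q m)%N by rewrite logn_gt0 mem_primes pq m0 qm.
  have q0 : (0 < q)%N := prime_gt0 pq.
  move: lq; rewrite cm lognM // (logn_prime q pq) eqxx; lia.
have qpc : q \in primes c by rewrite mem_primes pq c0 qc.
have szE : size (primes c) = (size (primes m)).+1.
  by rewrite pmE size_rem //; case: (primes c) qpc.
set i := index q (primes c).
have ilt : (i < (size (primes m)).+1)%N by rewrite -szE index_mem.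
have nthE : forall j, nth 0%N (primes c) (bump i j) = nth 0%N (primes m) j.
  move=> j; rewrite pmE remE -/i nth_cat size_takel; last by lia.
  rewrite /bump; case: (leqP i j) => ij /=.
    by rewrite nth_drop; congr nth; lia.
  by rewrite add0n nth_take.
have Ec : E c (q%:R : R) = (totient m)%:Z - E m (q%:R : R).
  rewrite E_GenN szE (GenN_split _ _ ilt) (nth_index _ qpc).
  rewrite !(GenN_ext _ _ nthE) /=.
  rewrite -natf_div // -/m E_GenN; congr (_ - _).
  exact: totient_sum.
rewrite Ec rmorphB /= -pmulrn cm totient_coprime; last first.
  by rewrite coprime_sym prime_coprime.
rewrite (totient_prime pq) natrM.
have -> : (q.-1%:R : R) = q%:R - 1.
  by rewrite -(prednK (ltnW q1)) -natr1 addrK.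
rewrite mulfK // subr_eq0 pnatr_eq1; lia.
Qed.
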